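(* All on-site potentials of the tridiagonalized chain unitarily mapped from any chiral-symmetric system are zero for any chosen anchor site.
   Context: A chiral-symmetric system is one with a Hermitian Hamiltonian matrix $H$ (of even dimension $n$) for which there exists a position basis, split into two sublattices $A$ and $B$, such that $\Gamma H = -H\Gamma$ with $\Gamma = I_{(n/2)\times(n/2)}\otimes\sigma_z$ ($\sigma_z$ the Pauli matrix); the system may be nonlocal or higher-dimensional. The system is mapped onto a 1D chain with only nearest-neighbor couplings by an ''improved Householder'' tridiagonalization: one chooses an anchor site $m$ (any site of the original system), exchanges the first and $m$-th rows and the corresponding columns of $H$ via a permutation matrix $\bar V$, and then applies the standard Householder tridiagonalization (starting from the first row and column) to $\bar V^{\dagger}H\bar V$, giving a unitary $V^{*}$ with $V^{*}_{11}=1$ and a tridiagonal matrix $H^{*}_{\mathrm{eff}} = V^{*\dagger}(\bar V^{\dagger}H\bar V)V^{*}$, whose subdiagonal entries are made real and positive by elementary sign changes (diagonal entries unchanged). The overall map is unitary, $H_{\mathrm{eff}} = (\bar V V^{*})^{\dagger} H (\bar V V^{*})$, and the dynamics of the anchor site is faithfully mapped to the first site of the new chain. The on-site potentials of the tridiagonalized chain are the diagonal entries of the tridiagonal Hamiltonian. The nontrivial case in which the tridiagonalized matrix has nonzero subdiagonal elements is considered. *)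

(* Defs.v *)
(* Complex scalars: an arbitrary numClosedFieldType C
   (e.g. complex R = R[i] for R a realType, or algC). Indices are 0-based. *)
From HB Require Import structures.
From mathcomp Require Import all_boot all_order all_algebra.
Set Implicit Arguments. Unset Strict Implicit. Unset Printing Implicit Defensive.
Import Order.TTheory GRing.Theory Num.Theory.
Local Open Scope ring_scope.

Section Chiral.
Variable C : numClosedFieldType.

Definition adjmx {m n : nat} (A : 'M[C]_(m, n)) : 'M[C]_(n, m) :=
  (map_mx (@Num.conj C) A)^T.

Definition is_hermitian {n : nat} (H : 'M[C]_n) : Prop := adjmx H = H.

(* Gamma = I_(n/2) (x) sigma_z = diag(1,-1,1,-1,...) (0-based: (-1)^i) *)
Definition gamma (n : nat) : 'M[C]_n :=
  \matrix_(i, j) ((i == j)%:R * (-1) ^+ i).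

Definition chiral {n : nat} (H : 'M[C]_n) : Prop :=
  gamma n *m H = - (H *m gamma n).

(* permutation matrix exchanging site 0 (the "first" site) and site m *)
Definition Vbar {n : nat} (m : 'I_n) : 'M[C]_n :=
  \matrix_(i, j) (if val i == 0%N then (j == m)%:R
                  else if i == m then (val j == 0%N)%:R
                  else (i == j)%:R).

Definition phase (z : C) : C := if z == 0 then 1 else z / `|z|.

(* Householder vector for step j: it acts on rows j+1..n-1 of column j.
   x = A[j+1.., j], alpha = - phase(x_0) ||x||, w = x - alpha e_(j+1). *)
Definition hh_vec {n : nat} (A : 'M[C]_n) (j : 'I_n) : 'cV[C]_n :=
  let s := sqrtC (\sum_(i : 'I_n | (j < i)%N) `|A i j| ^+ 2) in
  \col_i (if (i <= j)%N then 0
          else if val i == j.+1 then A i j + phase (A i j) * s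
          else A i j).

Definition hh_refl {n : nat} (A : 'M[C]_n) (j : 'I_n) : 'M[C]_n :=
  let w := hh_vec A j in
  let nw := \sum_i `|w i 0| ^+ 2 in
  if nw == 0 then 1%:M else 1%:M - (2 / nw) *: (w *m adjmx w).

(* standard Householder tridiagonalization, columns j = 0 .. n-3:
   returns the pair (Hs, Vs) with Hs = Vs^dag A Vs tridiagonal. *)
Definition householder {n : nat} (A : 'M[C]_n) : 'M[C]_n * 'M[C]_n :=
  foldl (fun BQ (j : 'I_n) =>
           let P := hh_refl BQ.1 j in (adjmx P *m BQ.1 *m P, BQ.2 *m P))
        (A, 1%:M) (filter (fun j : 'I_n => (val j).+2 < n)%N (enum 'I_n)).

(* elementary phase changes making the subdiagonal real positive:
   d_0 = 1, d_(i+1) = d_i * phase(T_(i+1,i)), D = diag(d). *)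
Definition sign_diag {n : nat} (T : 'M[C]_n) : 'M[C]_n :=
  diag_mx (\row_(i < n)
     \prod_(i' : 'I_n | (i' <= i)%N)
        \prod_(j : 'I_n | j.+1 == val i') phase (T i' j)).

Definition Hstar {n : nat} (m : 'I_n) (H : 'M[C]_n) : 'M[C]_n :=
  (householder (adjmx (Vbar m) *m H *m Vbar m)).1.

Definition Heff {n : nat} (m : 'I_n) (H : 'M[C]_n) : 'M[C]_n :=
  let T := Hstar m H in adjmx (sign_diag T) *m T *m sign_diag T.

Definition onsite {n : nat} (m : 'I_n) (H : 'M[C]_n) (i : 'I_n) : C :=
  Heff m H i i.

End Chiral.

(* Main.v *)
Require Import Defs.
From HB Require Import structures.
From mathcomp Require Import all_boot all_order all_algebra.
From mathcomp Require Import all_fingroup ring zify.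
Set Implicit Arguments. Unset Strict Implicit. Unset Printing Implicit Defensive.
Import Order.TTheory GRing.Theory Num.Theory.
Local Open Scope ring_scope.


Section Aux.
Variable C : numClosedFieldType.

Lemma adjmxE m n (A : 'M[C]_(m, n)) i j : adjmx A i j = (A j i)^*.
Proof. by rewrite /adjmx !mxE. Qed.

Lemma adjmxK m n (A : 'M[C]_(m, n)) : adjmx (adjmx A) = A.
Proof. by apply/matrixP => i j; rewrite !adjmxE conjCK. Qed.

Lemma adjmx_mul m n p (A : 'M[C]_(m, n)) (B : 'M[C]_(n, p)) :
  adjmx (A *m B) = adjmx B *m adjmx A.
Proof. by rewrite /adjmx map_mxM trmx_mul. Qed.

Lemma adjmx1 n : adjmx (1%:M : 'M[C]_n) = 1%:M.
Proof. by apply/matrixP => i j; rewrite adjmxE !mxE eq_sym rmorph_nat. Qed.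

Lemma diag_from_col n (T G : 'M[C]_n) (i : 'I_n) (s : C) :
  T *m G = - (G *m T) -> adjmx G = G -> s^* = s -> s != 0 ->
  (forall k, G k i = (k == i)%:R * s) -> T i i = 0.
Proof.
move=> TG hG hs s0 hcol.
have := congr1 (fun M : 'M[C]_n => M i i) TG; rewrite !mxE.
rewrite (bigD1 i) //= big1 => [|k ki]; last first.
  by rewrite hcol; move: ki; case: eqP => // _ _; rewrite mul0r mulr0.
rewrite (bigD1 i) //= big1 => [|k ki]; last first.
  by rewrite -hG adjmxE hcol; move: ki; rewrite eq_sym; case: eqP => // _ _; rewrite mul0r conjC0 mul0r.
rewrite -hG adjmxE hcol eqxx (_ : true%:R = 1 :> C) // mul1r hs !addr0 => /eqP.
rewrite mulrC -addr_eq0 -mulr2n mulrn_eq0 /= mulf_eq0 (negbTE s0) /=.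
by move/eqP.
Qed.


Lemma sum_delta n (F : 'I_n -> C) i : (forall l, l != i -> F l = 0) ->
  \sum_l F l = F i.
Proof. by move=> h; rewrite (bigD1 i) //= big1 ?addr0. Qed.

Lemma tridiag_zero n (T G : 'M[C]_n) (g : C) :
  T *m G = - (G *m T) -> adjmx G = G -> g^* = g -> g != 0 ->
  (forall k i0 : 'I_n, val i0 = 0%N -> G k i0 = (k == i0)%:R * g) ->
  (forall k j : 'I_n, (j.+1 < k)%N -> T k j = 0) ->
  (forall k j : 'I_n, (k.+1 < j)%N -> T k j = 0) ->
  (forall i j : 'I_n, val i = j.+1 -> T i j != 0) ->
  forall i, T i i = 0.
Proof.
move=> TG hG hg g0 hcol0 low up sub.
pose sg (m : nat) := g * (-1) ^+ m.
have sgC m : (sg m)^* = sg m.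
  rewrite /sg rmorphM rmorphXn rmorphN1; exact: (congr1 (fun x => x * _) hg).
have sg0 m : sg m != 0 by rewrite /sg mulf_neq0 // signr_eq0.
have sgS m : sg m.+1 = - sg m by rewrite /sg exprS mulrCA mulN1r.
pose claim m := forall i : 'I_n, val i = m -> forall k, G k i = (k == i)%:R * sg m.
suff all_claim : forall m m', (m' <= m)%N -> claim m'.
  by move=> i; apply: (diag_from_col TG hG (sgC i) (sg0 i)); apply: (all_claim i).
elim=> [|m IH] m'.
  rewrite leqn0 => /eqP -> i hi k; rewrite hcol0 // /sg expr0 mulr1 //.
rewrite leq_eqVlt ltnS => /orP [/eqP -> | /IH //].
move=> i' hi' k.
have mn : (m < n)%N by apply: ltnW; rewrite -hi'; exact: ltn_ord.
pose i := Ordinal mn.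
have hii' : val i' = (val i).+1 by rewrite hi'.
have Tii : T i i = 0.
  by apply: (diag_from_col TG hG (sgC m) (sg0 m)); apply: (IH m).
have eq1 := congr1 (fun M : 'M[C]_n => M k i) TG; rewrite /= !mxE in eq1.
rewrite (sum_delta (i := i)) in eq1; last first.
  by move=> l lk; rewrite (IH m) //= ; move: lk; case: eqP => // _ _; rewrite mul0r mulr0.
rewrite (IH m (leqnn m) i erefl i) eqxx (_ : true%:R = 1 :> C) // mul1r in eq1.
pose c := if (k <= m)%N then sg k * T k i else 0.
have tz : forall l, l != i' -> l != k -> G k l * T l i = 0.
  move=> l li' lk; case: (leqP l m) => hl.
    by rewrite (IH l hl l erefl k); move: lk; rewrite eq_sym; case: eqP => // _ _; rewrite !mul0r.
  rewrite low ?mulr0 //= ltn_neqAle hl andbT; apply: contra li' => /eqP h.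
  by apply/eqP/val_inj; rewrite /= hi'.
have rest : \sum_(l | l != i') G k l * T l i = c.
  have [ki'|ki'] := eqVneq k i'.
    rewrite big1 /c; last by move=> l li'; apply: tz => //; rewrite ki'.
    by rewrite ki' hi' ltnn.
  rewrite (bigD1 k) //= big1 ?addr0; last by move=> l /andP [? ?]; apply: tz.
  rewrite /c; case: (leqP k m) => hk; first by rewrite (IH k hk k erefl k) eqxx mul1r.
  rewrite low ?mulr0 //= ltn_neqAle hk andbT; apply: contra ki' => /eqP h.
  by apply/eqP/val_inj; rewrite /= hi'.
rewrite (bigD1 i') //= rest in eq1.
apply: (mulIf (sub _ _ hii')).
have -> : G k i' * T i' i = - (T k i * sg m) - c.
  by rewrite eq1 opprK addrK.
have [ki'|ki'] := eqVneq k i'.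
  by rewrite /c ki' hi' ltnn (_ : true%:R = 1 :> C) // sgS subr0 mul1r mulNr mulrC.
rewrite (_ : false%:R = 0 :> C) // !mul0r /c.
case: (leqP k m) => hk; last first.
  rewrite low ?mulr0 ?mul0r ?subr0 ?oppr0 //= ltn_neqAle hk andbT.
  by apply: contra ki' => /eqP h; apply/eqP/val_inj; rewrite /= hi'.
move: hk; rewrite leq_eqVlt => /orP [/eqP hk|].
  have -> : k = i by apply: val_inj.
  by rewrite Tii mul0r mulr0 oppr0 addr0.
rewrite leq_eqVlt => /orP [/eqP hk|hk].
  by rewrite /= -hk sgS mulrN opprK mulrC subrr.
by rewrite up // mul0r mulr0 oppr0 addr0.
Qed.

End Aux.



Section Refl.
Variable C : numClosedFieldType.

Lemma adjmxZ m n (a : C) (A : 'M[C]_(m, n)) : adjmx (a *: A) = a^* *: adjmx A.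
Proof. by apply/matrixP => i j; rewrite !(adjmxE, mxE) rmorphM. Qed.

Lemma adjmxB m n (A B : 'M[C]_(m, n)) : adjmx (A - B) = adjmx A - adjmx B.
Proof. by apply/matrixP => i j; rewrite !(adjmxE, mxE) rmorphB. Qed.

Lemma normsq_conj (x : C) : (`|x| ^+ 2)^* = `|x| ^+ 2.
Proof. by apply: geC0_conj; rewrite exprn_ge0. Qed.

Definition reflP n (w : 'cV[C]_n) : 'M[C]_n :=
  let nw := \sum_i `|w i 0| ^+ 2 in
  if nw == 0 then 1%:M else 1%:M - (2 / nw) *: (w *m adjmx w).

Lemma hh_reflE n (A : 'M[C]_n) j : hh_refl A j = reflP (hh_vec A j).
Proof. by []. Qed.

Lemma reflP_herm n (w : 'cV[C]_n) : adjmx (reflP w) = reflP w.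
Proof.
rewrite /reflP; case: ifP => nw0; first exact: adjmx1.
rewrite adjmxB adjmx1 adjmxZ adjmx_mul adjmxK rmorphM fmorphV rmorph_sum /=.
by under eq_bigr do rewrite normsq_conj; rewrite rmorph_nat.
Qed.

Lemma wsq n (w : 'cV[C]_n) : adjmx w *m w = (\sum_i `|w i 0| ^+ 2)%:M.
Proof.
apply/matrixP => i j; rewrite !ord1 !mxE /=.
by apply: eq_bigr => k _; rewrite adjmxE normCK mulrC.
Qed.

Lemma reflP_inv n (w : 'cV[C]_n) : reflP w *m reflP w = 1%:M.
Proof.
rewrite /reflP; case: ifP => nw0; first by rewrite mul1mx.
set nw := \sum_i _ in nw0 *; set c := 2 / nw; set W := w *m adjmx w.
have WW : W *m W = nw *: W.
  by rewrite /W mulmxA -(mulmxA w) wsq mul_mx_scalar scalemxAl.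
rewrite mulmxBl mul1mx mulmxBr mulmx1 -scalemxAl -scalemxAr WW !scalerA.
have -> : c * c * nw = c + c.
  by rewrite -mulrA /c divfK ?nw0 // mulr_natr mulr2n.
by rewrite scalerDl opprB addrK subrK.
Qed.

Lemma reflP_id n (w : 'cV[C]_n) (a k : 'I_n) : w a 0 = 0 ->
  reflP w k a = (k == a)%:R /\ reflP w a k = (a == k)%:R.
Proof.
move=> wa; rewrite /reflP; case: ifP => _; first by rewrite !mxE.
rewrite !mxE !big_ord1 !adjmxE wa conjC0 mulr0 mul0r !mulr0 !subr0.
by split.
Qed.

End Refl.



Section HH.
Variable C : numClosedFieldType.

Lemma cconjD (x y : C) : (x + y)^* = x^* + y^*. Proof. exact: rmorphD. Qed.
Lemma cconjM (x y : C) : (x * y)^* = x^* * y^*. Proof. exact: rmorphM. Qed.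

Lemma hh_vec_low n (B : 'M[C]_n) (J a : 'I_n) : (a <= J)%N -> hh_vec B J a 0 = 0.
Proof. by move=> h; rewrite mxE h. Qed.

Lemma hh_vec_high n (B : 'M[C]_n) (J a : 'I_n) : (J.+1 < a)%N -> hh_vec B J a 0 = B a J.
Proof.
move=> h; rewrite mxE leqNgt (ltn_trans (ltnSn _) h) /=.
by rewrite (gtn_eqF h).
Qed.

Lemma hh_vec_mid n (B : 'M[C]_n) (J a : 'I_n) : val a = J.+1 ->
  hh_vec B J a 0 = B a J + phase (B a J) *
     sqrtC (\sum_(i : 'I_n | (J < i)%N) `|B i J| ^+ 2).
Proof. by move=> h; have h' : nat_of_ord a = J.+1 := h; rewrite mxE h' ltnn /= h eqxx. Qed.

Lemma phase_facts (x : C) : x = phase x * `|x| /\ (phase x)^* * phase x = 1.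
Proof.
rewrite /phase; case: eqP => [->|/eqP x0]; first by rewrite normr0 mulr0 rmorph1 mulr1.
have r0 : `|x| != 0 by rewrite normr_eq0.
split; first by rewrite divfK.
by rewrite mulrC -normCK normrM normfV normr_id mulfV // expr1n.
Qed.

Lemma hh_key n (B : 'M[C]_n) (J i1 : 'I_n) : val i1 = J.+1 ->
  (\sum_a ((hh_vec B J a 0)^* * B a J)) *+ 2 = \sum_a `|hh_vec B J a 0| ^+ 2.
Proof.
move=> hi1.
set w := hh_vec B J.
set S := \sum_(i : 'I_n | (J < i)%N) `|B i J| ^+ 2.
set R := \sum_(i : 'I_n | (J < i)%N && (i != i1)) `|B i J| ^+ 2.
have SR : S = `|B i1 J| ^+ 2 + R by rewrite /S (bigD1 i1) //= hi1.
have e1 : \sum_(a | a != i1) `|w a 0| ^+ 2 = R.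
  rewrite /R big_mkcond [RHS]big_mkcond; apply: eq_bigr => a _ /=.
  case: eqP => [->|/eqP ai]; first by rewrite andbF.
  rewrite andbT; case: ltnP => h /=.
    rewrite /w hh_vec_high //; rewrite ltn_neqAle h andbT; apply: contra ai => /eqP e.
    by apply/eqP/val_inj; rewrite /= hi1 e.
  by rewrite /w hh_vec_low // normr0 expr0n.
have e2 : \sum_(a | a != i1) (w a 0)^* * B a J = R.
  rewrite /R big_mkcond [RHS]big_mkcond; apply: eq_bigr => a _ /=.
  case: eqP => [->|/eqP ai]; first by rewrite andbF.
  rewrite andbT; case: ltnP => h /=.
    rewrite /w hh_vec_high; first by rewrite normCK mulrC.
    rewrite ltn_neqAle h andbT; apply: contra ai => /eqP e.
    by apply/eqP/val_inj; rewrite /= hi1 e.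
  by rewrite /w hh_vec_low // conjC0 mul0r.
rewrite (bigD1 i1) //= e2 (bigD1 i1) //= e1 /w hh_vec_mid // -/S normCK.
set x := B i1 J; set s := sqrtC S.
have [xE uph] := phase_facts x.
set ph := phase x in xE uph *; set r := `|x| in xE SR *.
have rC : r^* = r by apply: geC0_conj; rewrite normr_ge0.
have sC : s^* = s.
  by apply: geC0_conj; rewrite sqrtC_ge0 /S sumr_ge0 // => i _; rewrite exprn_ge0.
have sS : s ^+ 2 = S by rewrite sqrtCK.
have RE : R = s ^+ 2 - r ^+ 2 by rewrite sS SR addrC addKr.
rewrite RE cconjD cconjM sC.
rewrite xE cconjM rC.
set u := ph^* in uph *.
clearbody u r s ph S R w.
apply/eqP; rewrite -subr_eq0; apply/eqP.
transitivity ((u * ph - 1) * (r ^+ 2 - s ^+ 2)); first by ring.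
by rewrite uph subrr mul0r.
Qed.

End HH.



Section Step.
Variable C : numClosedFieldType.

Lemma mulmx_id_col n (M P : 'M[C]_n) (j : 'I_n) :
  (forall a, P a j = (a == j)%:R) -> forall k, (M *m P) k j = M k j.
Proof.
move=> hP k; rewrite mxE (sum_delta (i := j)) ?hP ?eqxx ?mulr1 // => a aj.
by rewrite hP (negbTE aj) mulr0.
Qed.

Lemma col_zero n (B : 'M[C]_n) (J k : 'I_n) : (J.+1 < k)%N ->
  (hh_refl B J *m B *m hh_refl B J) k J = 0.
Proof.
move=> hk.
have hJ : (J.+1 < n)%N by apply: ltn_trans hk (ltn_ord k).
pose i1 := Ordinal hJ.
rewrite hh_reflE mulmx_id_col; last first.
  by move=> a; case: (reflP_id a (hh_vec_low B (leqnn J))).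
set w := hh_vec B J.
have wk : w k 0 = B k J by rewrite /w hh_vec_high.
rewrite mxE /reflP; case: ifP => nw0.
  rewrite (sum_delta (i := k)); last by move=> a ak; rewrite mxE eq_sym (negbTE ak) mul0r.
  rewrite mxE eqxx mul1r -wk.
  have := @psumr_eq0P _ _ xpredT _ (fun i _ => exprn_ge0 2 (normr_ge0 (w i 0))) (eqP nw0) k isT.
  move=> /eqP.
  by rewrite expf_eq0 normr_eq0 /= => /eqP.
set nw := \sum_i _ in nw0 *.
have key := hh_key B (erefl (val i1)).
rewrite -/w -/nw in key.
under eq_bigr do rewrite !mxE big_ord1 adjmxE mulrBl.
rewrite sumrB (sum_delta (i := k)); last by move=> a ak; rewrite eq_sym (negbTE ak) mul0r.
rewrite eqxx mul1r.
have -> : \sum_i 2 / nw * (w k 0 * (w i 0)^*) * B i J =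
          (2 / nw * (\sum_i (w i 0)^* * B i J)) * w k 0.
  rewrite mulr_sumr mulr_suml; apply: eq_bigr => i _; ring.
by rewrite mulrC -mulrA mulr_natl -mulrnAr key mulVf ?nw0 // mulr1 wk subrr.
Qed.


Lemma conj_herm n (P B : 'M[C]_n) : adjmx B = B ->
  adjmx (adjmx P *m B *m P) = adjmx P *m B *m P.
Proof. by move=> hB; rewrite !adjmx_mul adjmxK hB mulmxA. Qed.

Lemma conj_mul n (P X Y : 'M[C]_n) : P *m adjmx P = 1%:M ->
  (adjmx P *m X *m P) *m (adjmx P *m Y *m P) = adjmx P *m (X *m Y) *m P.
Proof.
move=> hP; rewrite -!mulmxA (mulmxA P (adjmx P)) hP mul1mx; done.
Qed.

Lemma conj_anti n (P B G : 'M[C]_n) : P *m adjmx P = 1%:M ->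
  B *m G = - (G *m B) ->
  (adjmx P *m B *m P) *m (adjmx P *m G *m P) =
    - ((adjmx P *m G *m P) *m (adjmx P *m B *m P)).
Proof.
by move=> hP hBG; rewrite !conj_mul // hBG mulmxN mulNmx.
Qed.

Definition Inv n (B G : 'M[C]_n) (g : C) (J : nat) :=
 [/\ adjmx B = B, B *m G = - (G *m B), adjmx G = G,
     (forall k i0 : 'I_n, val i0 = 0%N -> G k i0 = (k == i0)%:R * g) &
     (forall k j : 'I_n, (j < J)%N -> (j.+1 < k)%N -> B k j = 0)].

Lemma step_inv n (B G : 'M[C]_n) g (J : 'I_n) : Inv B G g J ->
  Inv (adjmx (hh_refl B J) *m B *m hh_refl B J)
      (adjmx (hh_refl B J) *m G *m hh_refl B J) g J.+1.
Proof.
case=> hB hBG hG hcol hlow.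
have hP : adjmx (hh_refl B J) = hh_refl B J by rewrite hh_reflE reflP_herm.
have hPP : hh_refl B J *m adjmx (hh_refl B J) = 1%:M by rewrite hP hh_reflE reflP_inv.
have Pid : forall a k : 'I_n, (a <= J)%N ->
    hh_refl B J k a = (k == a)%:R /\ hh_refl B J a k = (a == k)%:R.
  by move=> a k ha; rewrite hh_reflE; apply: reflP_id; apply: hh_vec_low.
split.
- exact: conj_herm.
- exact: conj_anti.
- exact: conj_herm.
- move=> k i0 hi0; rewrite hP mulmx_id_col; last first.
    by move=> a; case: (Pid i0 a); rewrite ?hi0.
  rewrite mxE (sum_delta (i := i0)); last first.
    by move=> a ai; rewrite hcol // (negbTE ai) mul0r mulr0.
  rewrite hcol // eqxx (_ : true%:R = 1 :> C) // mul1r.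
  by case: (Pid i0 k); rewrite ?hi0 // => -> _.
- move=> k j; rewrite ltnS leq_eqVlt => /orP [/eqP hj|hj] hk.
    have -> : j = J by apply: val_inj.
    by rewrite hP; apply: col_zero; rewrite -hj.
  rewrite hP mulmx_id_col; last first.
    by move=> a; case: (Pid j a) => //; apply: ltnW.
  rewrite mxE (eq_bigr (fun a => (k == a)%:R * B a j)); last first.
    move=> a _; case: (ltnP j.+1 a) => ha; first by rewrite hlow // !mulr0.
    by case: (Pid a k (leq_trans ha hj)) => ->.
  rewrite (sum_delta (i := k)) ?eqxx ?mul1r ?hlow //.
  by move=> a ak; rewrite eq_sym (negbTE ak) mul0r.
Qed.

Definition hstep n (BQ : 'M[C]_n * 'M[C]_n) (j : 'I_n) :=
  let P := hh_refl BQ.1 j in (adjmx P *m BQ.1 *m P, BQ.2 *m P).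

Lemma fold_inv n (l : seq 'I_n) : forall (B Q G : 'M[C]_n) g (J : nat),
  Inv B G g J -> map val l = iota J (size l) ->
  exists G', Inv (foldl (@hstep n) (B, Q) l).1 G' g (J + size l).
Proof.
elim: l => [|j l IH] B Q G g J hI hl /=; first by exists G; rewrite addn0.
case: hl => hj hl.
have hI' : Inv B G g j by rewrite hj.
have := step_inv hI'; rewrite hj => hI2.
have [G' HG'] := IH _ (Q *m hh_refl B j) _ _ _ hI2 hl.
by exists G'; rewrite addnS -addSn.
Qed.

End Step.



Section Main.
Variable C : numClosedFieldType.

Lemma Vbar_perm n (m : 'I_n.+1) : Vbar C m = perm_mx (tperm ord0 m).
Proof.
apply/matrixP => i j; rewrite !mxE permE /=.
case: (eqVneq i ord0) => [->|i0] /=; first by rewrite eq_sym.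
have -> : (val i == 0%N) = false by apply/negbTE; apply: contra i0 => /eqP h; apply/eqP/val_inj.
case: (i == m) => //.
have -> : (j == 0%N :> nat) = (ord0 == j) by rewrite eq_sym; apply/eqP/eqP => [h|<-] //; apply: val_inj.
by [].
Qed.

Lemma adjmx_perm n (s : 'S_n) : adjmx (perm_mx s : 'M[C]_n) = (perm_mx s)^T.
Proof. by apply/matrixP => i j; rewrite adjmxE !mxE conjC_nat. Qed.

Lemma perm_unitary n (s : 'S_n) :
  (perm_mx s : 'M[C]_n) *m adjmx (perm_mx s) = 1%:M.
Proof. by rewrite adjmx_perm tr_perm_mx -perm_mxM mulgV perm_mx1. Qed.

Lemma gamma_herm n : adjmx (gamma C n) = gamma C n.
Proof.
apply/matrixP => i j; rewrite adjmxE !mxE.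
case: (eqVneq i j) => [->|ij].
  by rewrite (_ : true%:R = 1 :> C) // !mul1r rmorphXn rmorphN1.
by rewrite (_ : false%:R = 0 :> C) // !mul0r conjC0.
Qed.

Lemma filter_iota n :
  filter (fun k => (k.+2 < n)%N) (iota 0 n) = iota 0 (n - 2).
Proof.
have -> : iota 0 n = iota 0 (n - 2) ++ iota (0 + (n - 2)) (n - (n - 2)).
  by rewrite -iotaD; congr iota; lia.
rewrite filter_cat -[RHS]cats0; congr (_ ++ _).
  apply/all_filterP/allP => k; rewrite mem_iota => /andP [h1 h2]; lia.
rewrite (eq_in_filter (a2 := pred0)) ?filter_pred0 //.
move=> k; rewrite mem_iota => /andP [h1 h2] /=; apply/negbTE; lia.
Qed.

Lemma enum_filter n :
  map val (filter (fun j : 'I_n => (j.+2 < n)%N) (enum 'I_n)) = iota 0 (n - 2).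
Proof.
transitivity (filter (fun k => (k.+2 < n)%N) (map val (enum 'I_n))).
  by rewrite filter_map.
by rewrite val_enum_ord filter_iota.
Qed.

End Main.

Lemma G0_col (C : numClosedFieldType) n (m : 'I_n.+1) (k : 'I_n.+1) :
  (adjmx (Vbar C m) *m gamma C n.+1 *m Vbar C m) k ord0 = (k == ord0)%:R * (-1) ^+ m.
Proof.
set s := tperm ord0 m.
rewrite Vbar_perm adjmx_perm tr_perm_mx tpermV -row_permE.
have -> : perm_mx (tperm ord0 m) = perm_mx (tperm ord0 m)^-1 :> 'M[C]_n.+1 by rewrite tpermV.
rewrite -col_permE col_permEsub row_permEsub !mxE (inj_eq perm_inj).
case: (eqVneq k ord0) => [->|k0]; first by rewrite tpermL.
by rewrite (_ : false%:R = 0 :> C) // !mul0r.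
Qed.

Unset Implicit Arguments.
Set Strict Implicit.

Theorem theorem1 (C : numClosedFieldType) (n : nat) (H : 'M[C]_n) :
  ~~ odd n -> is_hermitian H -> chiral H ->
  forall m : 'I_n,
    (forall i j : 'I_n, val i = j.+1 -> Hstar m H i j != 0) ->
    forall i : 'I_n, onsite m H i = 0.
Proof.
move=> _ hH hchi m hsub i.
move: H hH hchi m hsub i; case: n => [|n] H hH hchi m hsub i; first by exfalso; have := ltn_ord m; rewrite ltn0.
pose V := Vbar C m.
have hV : V *m adjmx V = 1%:M by rewrite /V Vbar_perm perm_unitary.
pose A := adjmx V *m H *m V.
pose G0 := adjmx V *m gamma C n.+1 *m V.
pose L := filter (fun j : 'I_n.+1 => (j.+2 < n.+1)%N) (enum 'I_n.+1).
have inv0 : Inv A G0 ((-1) ^+ m) 0.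
  split.
  - exact: conj_herm.
  - apply: conj_anti => //; rewrite /chiral in hchi.
    by rewrite hchi opprK.
  - exact/conj_herm/gamma_herm.
  - move=> k i0 hi0; have -> : i0 = ord0 by apply: val_inj.
    exact: G0_col.
  - by [].
have hL : map val L = iota 0 (size L).
  have := enum_filter n.+1; rewrite -/L => e.
  by rewrite e -(size_map val L) e size_iota.
have [G' [hT hTG hG' hcol hlow]] := fold_inv 1%:M inv0 hL.
have hs : Hstar m H = (foldl (@hstep C n.+1) (A, 1%:M) L).1 by [].
rewrite -hs add0n in hT hTG hlow.
have sizeL : size L = (n.+1 - 2)%N.
  by rewrite -(size_map val L) enum_filter size_iota.
have Tdiag := tridiag_zero hTG hG' (g := (-1) ^+ m).
have Tz : forall i, Hstar m H i i = 0.
  apply: Tdiag => //.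
  - by rewrite rmorphXn rmorphN1.
  - by rewrite signr_eq0.
  - move=> k j hk; apply: hlow => //; rewrite sizeL.
    have := ltn_ord k; lia.
  - move=> k j hk; rewrite -hT adjmxE.
    have -> : Hstar m H j k = 0.
      apply: hlow => //; rewrite sizeL; have := ltn_ord j; lia.
    by rewrite conjC0.
rewrite /onsite /Heff /sign_diag.
set T := Hstar m H; set d := \row_(i0 < n.+1) _.
rewrite mul_mx_diag mxE mxE (sum_delta (i := i)).
  by rewrite Tz mulr0 mul0r.
move=> k ki; rewrite adjmxE mxE; move: ki; case: eqP => // _ _; by rewrite mulr0n conjC0 mul0r.
Qed.
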